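(* Let $A\subset\mathbb R$ be an open interval of length $R>2$ and let $\psi:A\to\mathbb C$ be a regular $\mathbb C$-supershift on $A$. Let $0<\delta<R-2$, let $\theta$ be a smooth function on $\mathbb R$ with support in $[0,\delta]$, and let $A_\delta=\{a\in A:\ a-\delta\in A\}$. Then the function $$(\psi*\theta)(a)=\int_0^\delta\theta(\alpha)\,\psi(a-\alpha)\,d\alpha,\qquad a\in A_\delta,$$ is smooth and is a regular $\mathbb C$-supershift on $A_\delta$.
   Context: For an open interval $A\subset\mathbb R$ of length $R>2$ (possibly infinite), set $\mathbb A=\{(a,a')\in\mathbb R\times A:\ a'+[-1,1]\subset A,\ a+a'\in A\}$. For a sequence $\boldsymbol\epsilon=(\epsilon_N)_{N\ge1}$ with $\epsilon_N\in[0,1)$ and $\epsilon_N\to0$, put $h^{\boldsymbol\epsilon}_{N,\nu}=1-2\,\frac{\nu+\epsilon_N(N-\nu)}{N}$ for $0\le\nu\le N$. For a continuous $\psi:A\to\mathbb C$ and $(a,a')\in\mathbb A$ set $$S_N^{\boldsymbol\epsilon}[\psi](a,a')=\sum_{\nu=0}^N\binom N\nu\Big(\frac{1+a}2\Big)^{N-\nu}\Big(\frac{1-a}2\Big)^{\nu}\psi\big(a'+h^{\boldsymbol\epsilon}_{N,\nu}\big).$$ A continuous $\psi:A\to\mathbb C$ is called a regular $\mathbb C$-supershift on $A$ if (1) for every such sequence $\boldsymbol\epsilon$, $S_N^{\boldsymbol\epsilon}[\psi](a,a')\to\psi(a+a')$ as $N\to\infty$ uniformly on compact subsets of $\mathbb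 A$; and (2) for every family $\{\boldsymbol\epsilon_{\iota'}=(\epsilon_{\iota',N})_{N\ge1}:\iota'\in I'\}$ of such sequences with $\sup_{\iota'\in I'}\epsilon_{\iota',N}\to0$ as $N\to\infty$, the convergence in (1) is uniform with respect to $\iota'\in I'$ on each compact subset of $\mathbb A$. *)

(* Defs.v *)
From Stdlib Require Import Reals List.
From Coquelicot Require Import Coquelicot.
Open Scope R_scope.

Definition in_interval (lo hi : Rbar) (x : R) : Prop :=
  Rbar_lt lo x /\ Rbar_lt x hi.

Definition AA (A : R -> Prop) (p : R * R) : Prop :=
  (forall t, -1 <= t <= 1 -> A (snd p + t)) /\ A (snd p) /\ A (fst p + snd p).

Definition compact_RR (K : R * R -> Prop) : Prop :=
  forall (I : Type) (U : I -> R * R -> Prop),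
    (forall i, open (U i)) ->
    (forall p, K p -> exists i, U i p) ->
    exists l : list I, forall p, K p -> exists i, In i l /\ U i p.

Definition adm_seq (eps : nat -> R) : Prop :=
  (forall N, (1 <= N)%nat -> 0 <= eps N < 1) /\ is_lim_seq eps 0.

Definition h_eps (eps : nat -> R) (N nu : nat) : R :=
  1 - 2 * ((INR nu + eps N * (INR N - INR nu)) / INR N).

Definition S_eps (eps : nat -> R) (psi : R -> C) (N : nat) (a a' : R) : C :=
  sum_n (fun nu : nat =>
    Cmult (RtoC (Binomial.C N nu * ((1 + a) / 2) ^ (N - nu) * ((1 - a) / 2) ^ nu))
          (psi (a' + h_eps eps N nu))) N.

Definition regular_supershift (A : R -> Prop) (psi : R -> C) : Prop :=
  (forall x, A x -> continuous psi x) /\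
  (forall eps, adm_seq eps ->
    forall K, compact_RR K -> (forall p, K p -> AA A p) ->
    forall e, 0 < e -> exists N0 : nat, forall N, (N0 <= N)%nat ->
      forall p, K p -> Cmod (Cminus (S_eps eps psi N (fst p) (snd p)) (psi (fst p + snd p))) < e) /\
  (forall (I' : Type) (epsf : I' -> nat -> R),
    (forall i, adm_seq (epsf i)) ->
    (forall eta, 0 < eta -> exists N1 : nat, forall N, (N1 <= N)%nat ->
        forall i, epsf i N <= eta) ->
    forall K, compact_RR K -> (forall p, K p -> AA A p) ->
    forall e, 0 < e -> exists N0 : nat, forall N, (N0 <= N)%nat ->
      forall i p, K p ->
        Cmod (Cminus (S_eps (epsf i) psi N (fst p) (snd p)) (psi (fst p + snd p))) < e).

Definition smooth_R_on (D : R -> Prop) (f : R -> R) : Prop :=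
  exists F : nat -> R -> R, (forall x, F O x = f x) /\
    forall n x, D x -> is_derive (F n) x (F (S n) x).

Definition smooth_C_on (D : R -> Prop) (f : R -> C) : Prop :=
  exists F : nat -> R -> C, (forall x, F O x = f x) /\
    forall n x, D x -> @is_derive R_AbsRing C_R_NormedModule (F n) x (F (S n) x).

Definition conv_delta (psi : R -> C) (theta : R -> R) (delta : R) (a : R) : C :=
  @RInt C_R_CompleteNormedModule
    (fun alpha => Cmult (RtoC (theta alpha)) (psi (a - alpha))) 0 delta.

(* Main.v *)
Require Import Defs.
From Stdlib Require Import Reals List Lra Lia Classical FunctionalExtensionality ClassicalEpsilon.
From Coquelicot Require Import Coquelicot.
Open Scope R_scope.

Lemma int_conv lo hi x y z : in_interval lo hi x -> in_interval lo hi y -> x <= z <= y -> in_interval lo hi z.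
Proof.
  unfold in_interval; intros [H1 H2] [H3 H4] H5.
  destruct lo as [l| |], hi as [h| |]; simpl in *; split; try tauto; lra.
Qed.

Lemma int_open lo hi x : in_interval lo hi x -> exists r, 0 < r /\ forall y, Rabs (y - x) < r -> in_interval lo hi y.
Proof.
  unfold in_interval; intros [H1 H2].
  destruct lo as [l| |], hi as [h| |]; simpl in H1, H2; try contradiction.
  - exists (Rmin (x-l) (h-x)). split. apply Rmin_pos; lra.
    intros y Hy; apply Rabs_def2 in Hy. pose proof (Rmin_l (x-l) (h-x)). pose proof (Rmin_r (x-l) (h-x)).
    simpl; split; lra.
  - exists (x - l). split. lra. intros y Hy; apply Rabs_def2 in Hy. simpl; split; [lra|exact I].
  - exists (h - x). split. lra. intros y Hy; apply Rabs_def2 in Hy. simpl; split; [exact I|lra].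
  - exists 1. split. lra. intros y Hy. simpl; split; exact I.
Qed.

Lemma Cm_scal (r : R) (z : C) : Cmult (RtoC r) z = @scal R_Ring C_R_ModuleSpace r z.
Proof. destruct z as [x y]. unfold Cmult, RtoC, scal. simpl. unfold prod_scal. simpl.
  unfold scal; simpl. unfold mult; simpl. f_equal; ring. Qed.

Lemma g_zero (F : nat -> R -> R) (theta : R -> R) (delta : R)
  (HF0 : forall x, F O x = theta x) (HF : forall n x, True -> is_derive (F n) x (F (S n) x))
  (Hs : forall x, theta x <> 0 -> 0 <= x <= delta) :
  forall n x, (x < 0 \/ delta < x) -> F n x = 0.
Proof.
  induction n; intros x Hx.
  - rewrite HF0. destruct (Req_dec (theta x) 0) as [h|h]; auto. apply Hs in h; lra.
  - assert (Hloc : locally x (fun t => (fun _ : R => 0) t = F n t)).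
    { destruct Hx as [Hx|Hx].
      - assert (Hp : 0 < - x) by lra. exists (mkposreal _ Hp). intros t Ht.
        assert (Rabs (t - x) < - x) by exact Ht. apply Rabs_def2 in H. symmetry; apply IHn; lra.
      - assert (Hp : 0 < x - delta) by lra. exists (mkposreal _ Hp). intros t Ht.
        assert (Rabs (t - x) < x - delta) by exact Ht. apply Rabs_def2 in H. symmetry; apply IHn; lra. }
    pose proof (is_derive_ext_loc _ _ x _ Hloc (is_derive_const (K:=R_AbsRing) (V:=R_NormedModule) 0 x)) as H1.
    pose proof (is_derive_unique _ _ _ H1) as E1.
    pose proof (is_derive_unique _ _ _ (HF n x I)) as E2.
    rewrite <- E2, E1. reflexivity.
Qed.

Lemma g_cont (F : nat -> R -> R) (HF : forall n x, True -> is_derive (F n) x (F (S n) x)) n c :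
  continuity_pt (F n) c.
Proof. apply continuity_pt_filterlim. apply (ex_derive_continuous (K:=R_AbsRing) (V:=R_NormedModule)).
  eexists; apply HF; auto. Qed.

Lemma g_bound (F : nat -> R -> R) (theta : R -> R) (delta : R)
  (HF0 : forall x, F O x = theta x) (HF : forall n x, True -> is_derive (F n) x (F (S n) x))
  (Hs : forall x, theta x <> 0 -> 0 <= x <= delta) (Hd : 0 <= delta) :
  forall n, exists M, 0 <= M /\ forall x, Rabs (F n x) <= M.
Proof.
  intro n.
  assert (Hc : forall c, 0 <= c <= delta -> continuity_pt (fun x => Rabs (F n x)) c).
  { intros c _. apply (continuity_pt_comp (F n) Rabs). apply g_cont; auto. apply Rcontinuity_abs. }
  destruct (continuity_ab_maj _ 0 delta Hd Hc) as [Mx [HM _]].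
  exists (Rabs (F n Mx)). split. apply Rabs_pos.
  intro x. destruct (Rlt_or_le x 0) as [h|h].
  - rewrite (g_zero F theta delta HF0 HF Hs n x (or_introl h)), Rabs_R0. apply Rabs_pos.
  - destruct (Rlt_or_le delta x) as [h'|h'].
    + rewrite (g_zero F theta delta HF0 HF Hs n x (or_intror h')), Rabs_R0. apply Rabs_pos.
    + apply HM; lra.
Qed.

Notation CV := C_R_CompleteNormedModule.

Definition Phi (psi : R -> C) (g : R -> R) (delta a : R) : C :=
  @RInt CV (fun al => @scal R_Ring C_R_ModuleSpace (g al) (psi (a - al))) 0 delta.

Definition Gamma (psi : R -> C) (g : R -> R) (c d a : R) : C :=
  @RInt CV (fun b => @scal R_Ring C_R_ModuleSpace (g (a - b)) (psi b)) c d.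

Lemma cont_Phi_int (psi : R -> C) (g : R -> R) x al :
  continuous g al -> continuous psi (x - al) ->
  @continuous R_UniformSpace CV (fun al => @scal R_Ring C_R_ModuleSpace (g al) (psi (x - al))) al.
Proof.
  intros Hg Hp. apply (continuous_scal (K:=R_AbsRing) (V:=C_R_NormedModule)). exact Hg.
  apply (continuous_comp (fun al => x - al) psi). 
  apply (continuous_minus (V:=R_NormedModule) (fun _ => x) (fun al => al)).
  apply continuous_const. apply continuous_id. exact Hp.
Qed.

Lemma cont_Gamma_int (psi : R -> C) (g : R -> R) a b :
  continuous g (a - b) -> continuous psi b ->
  @continuous R_UniformSpace CV (fun b => @scal R_Ring C_R_ModuleSpace (g (a - b)) (psi b)) b.
Proof.
  intros Hg Hp. apply (continuous_scal (K:=R_AbsRing) (V:=C_R_NormedModule)).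
  apply (continuous_comp (fun b => a - b) g).
  apply (continuous_minus (V:=R_NormedModule) (fun _ => a) (fun al => al)).
  apply continuous_const. apply continuous_id. exact Hg. exact Hp.
Qed.
Lemma Phi_Gamma (psi : R -> C) (g : R -> R) delta c d a :
  0 <= delta -> (forall x, continuous g x) -> (forall x, (x < 0 \/ delta < x) -> g x = 0) ->
  (forall b, c <= b <= d -> continuous psi b) -> c <= a - delta -> a <= d ->
  Phi psi g delta a = Gamma psi g c d a.
Proof.
  intros Hd Hg Hz Hp Hc Hd'.
  set (f := fun b => @scal R_Ring C_R_ModuleSpace (g (a - b)) (psi b)).
  assert (exf : forall u v, c <= u <= d -> c <= v <= d -> @ex_RInt CV f u v).
  { intros u v Hu Hv. apply ex_RInt_continuous. intros z [Hz1 Hz2].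
    apply cont_Gamma_int. apply Hg. apply Hp. split.
    - apply Rle_trans with (Rmin u v); auto. apply Rmin_glb; lra.
    - apply Rle_trans with (Rmax u v); auto. apply Rmax_lub; lra. }
  assert (S1 : Phi psi g delta a = @RInt CV f (a - delta) a).
  { rewrite <- opp_RInt_swap by (apply exf; lra).
    assert (E : @RInt CV f a (a - delta) = @RInt CV (fun y => scal (-1) (f (-1 * y + a))) 0 delta).
    { transitivity (@RInt CV f (-1 * 0 + a) (-1 * delta + a)).
      f_equal; ring. symmetry; refine (RInt_comp_lin (V:=CV) f (-1) a 0 delta _).
      replace (-1 * 0 + a) with a by ring. replace (-1 * delta + a) with (a - delta) by ring.
      apply exf; lra. }
    rewrite E.
    assert (exi : @ex_RInt CV (fun al => @scal R_Ring C_R_ModuleSpace (g al) (psi (a - al))) 0 delta).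
    { apply ex_RInt_continuous. intros z [Hz1 Hz2]. apply cont_Phi_int. apply Hg.
      rewrite Rmin_left in Hz1 by lra. rewrite Rmax_right in Hz2 by lra. apply Hp; lra. }
    rewrite (RInt_ext (V:=CV) _ (fun y => opp (@scal R_Ring C_R_ModuleSpace (g y) (psi (a - y))))).
    2: { intros y _. unfold f. replace (a - (-1 * y + a)) with y by ring.
         replace (-1 * y + a) with (a - y) by ring.
         rewrite <- (scal_opp_one (K:=R_Ring)). f_equal.
         }
    pose proof (RInt_opp (V:=CV) _ 0 delta exi) as HO.
    transitivity (@opp CV (@opp CV (@RInt CV (fun al => @scal R_Ring C_R_ModuleSpace (g al) (psi (a - al))) 0 delta))).
    rewrite opp_opp. reflexivity. f_equal. symmetry. exact HO. }
  rewrite S1. unfold Gamma. fold f.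
  assert (Z1 : @RInt CV f c (a - delta) = zero).
  { rewrite (RInt_ext (V:=CV) _ (fun _ => zero)). rewrite RInt_const. exact (@scal_zero_r R_Ring (CompleteNormedModule.ModuleSpace R_AbsRing CV) _).
    intros x [Hx1 Hx2]. rewrite Rmax_right in Hx2 by lra. unfold f. rewrite Hz by lra. exact (@scal_zero_l R_Ring C_R_ModuleSpace _). }
  assert (Z2 : @RInt CV f a d = zero).
  { rewrite (RInt_ext (V:=CV) _ (fun _ => zero)). rewrite RInt_const. exact (@scal_zero_r R_Ring (CompleteNormedModule.ModuleSpace R_AbsRing CV) _).
    intros x [Hx1 Hx2]. rewrite Rmin_left in Hx1 by lra. unfold f. rewrite Hz by lra. exact (@scal_zero_l R_Ring C_R_ModuleSpace _). }
  rewrite <- (RInt_Chasles (V:=CV) f c (a - delta) d) by (apply exf; lra).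
  rewrite <- (RInt_Chasles (V:=CV) f (a - delta) a d) by (apply exf; lra).
  rewrite Z1, Z2, plus_zero_l, plus_zero_r. reflexivity.
Qed.

Lemma Cmod_normC (z : C) : Cmod z = @norm R_AbsRing C_R_NormedModule z.
Proof. rewrite Cmod_norm. reflexivity. Qed.

Lemma psi_bound (psi : R -> C) c d : c <= d -> (forall b, c <= b <= d -> continuous psi b) ->
  exists M, 0 <= M /\ forall b, c <= b <= d -> @norm R_AbsRing C_R_NormedModule (psi b) <= M.
Proof.
  intros Hcd Hp.
  assert (Hc : forall b, c <= b <= d -> continuity_pt (fun b => Cmod (psi b)) b).
  { intros b Hb. apply continuity_pt_filterlim.
    apply (filterlim_comp _ _ _ psi Cmod (locally b) (locally (psi b))). apply Hp; auto.
    intros P HP. rewrite Cmod_normC in HP.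
    pose proof (filterlim_norm (K:=R_AbsRing) (V:=C_R_NormedModule) (psi b) P HP) as HH.
    destruct HH as [e He]. exists e. intros z Hz. specialize (He z Hz). simpl in He.
    rewrite Cmod_normC. exact He. }
  destruct (continuity_ab_maj _ c d Hcd Hc) as [Mx [HM _]].
  exists (Cmod (psi Mx)). split. apply Cmod_ge_0.
  intros b Hb. rewrite <- Cmod_normC. apply HM; auto.
Qed.

Lemma taylor2 (g g' g'' : R -> R) (M2 : R)
  (H1 : forall x, is_derive g x (g' x)) (H2 : forall x, is_derive g' x (g'' x))
  (HM : forall x, Rabs (g'' x) <= M2) :
  forall x h, Rabs (g (x + h) - g x - h * g' x) <= M2 * (h * h).
Proof.
  intros x h.
  assert (Hk : forall t, Rabs (t - 0) <= Rabs h -> is_derive (fun t => g (x + t) - t * g' x) t (g' (x + t) - g' x)).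
  { intros t _. auto_derive. exists (g' (x + t)). apply H1.
    change (fun x0 : R => g x0) with g. rewrite (is_derive_unique _ _ _ (H1 (x+t))). ring. }
  destruct (MVT_cor4 _ _ 0 (Rabs h) Hk h ltac:(rewrite Rminus_0_r; lra)) as [c [Ec Hc]].
  assert (Hg : forall t, Rabs (t - x) <= Rabs c -> is_derive g' t (g'' t)) by (intros; apply H2).
  assert (Hxc : Rabs (x + c - x) <= Rabs c) by (replace (x + c - x) with c by ring; lra).
  destruct (MVT_cor4 _ _ x (Rabs c) Hg (x + c) Hxc) as [c' [Ec' _]].
  replace (g (x + h) - g x - h * g' x) with ((g (x + h) - h * g' x) - (g (x + 0) - 0 * g' x))
    by (rewrite Rplus_0_r; ring).
  rewrite Ec. replace (h - 0) with h in * by ring. replace (c - 0) with c in * by ring.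
  rewrite Ec'. replace (x + c - x) with c by ring.
  rewrite !Rabs_mult.
  assert (0 <= Rabs c') by apply Rabs_pos.
  assert (0 <= Rabs c) by apply Rabs_pos. assert (0 <= Rabs h) by apply Rabs_pos.
  assert (Rabs (g'' c') <= M2) by apply HM.
  assert (0 <= Rabs (g'' c')) by apply Rabs_pos.
  assert (Hhh : h * h = Rabs h * Rabs h) by (rewrite <- Rabs_mult; rewrite Rabs_right; nra).
  rewrite Hhh. 
  apply Rle_trans with (Rabs (g'' c') * Rabs h * Rabs h).
  - apply Rmult_le_compat_r; auto. apply Rmult_le_compat_l; auto.
  - nra.
Qed.

Lemma scal_comb (A B k C0 : R) (z : C): @minus C_R_NormedModule (minus (@scal R_Ring C_R_ModuleSpace A z) (@scal R_Ring C_R_ModuleSpace B z)) (@scal R_Ring C_R_ModuleSpace k (@scal R_Ring C_R_ModuleSpace C0 z)) = @scal R_Ring C_R_ModuleSpace (A - B - k*C0) z.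
Proof. destruct z as [x y]. compute. f_equal; ring. Qed.

Lemma Gamma_derive (psi : R -> C) (g g' g'' : R -> R) M2 c d a0 :
  (forall x, is_derive g x (g' x)) -> (forall x, is_derive g' x (g'' x)) ->
  (forall x, Rabs (g'' x) <= M2) -> c <= d ->
  (forall b, c <= b <= d -> continuous psi b) ->
  is_derive (K:=R_AbsRing) (V:=C_R_NormedModule) (Gamma psi g c d) a0 (Gamma psi g' c d a0).
Proof.
  intros H1 H2 HM Hcd Hp.
  destruct (psi_bound psi c d Hcd Hp) as [Mp [HMp0 HMp]].
  assert (HM0 : 0 <= M2) by (apply Rle_trans with (Rabs (g'' 0)); [apply Rabs_pos|apply HM]).
  assert (Hcg : forall x, continuous g x) by (intro x; apply (ex_derive_continuous (K:=R_AbsRing) (V:=R_NormedModule)); eexists; apply H1).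
  assert (Hcg' : forall x, continuous g' x) by (intro x; apply (ex_derive_continuous (K:=R_AbsRing) (V:=R_NormedModule)); eexists; apply H2).
  assert (exR : forall h a, (forall x, continuous h x) ->
     @ex_RInt CV (fun b => @scal R_Ring C_R_ModuleSpace (h (a - b)) (psi b)) c d).
  { intros h a Hh. apply ex_RInt_continuous. intros z [Hz1 Hz2].
    rewrite Rmin_left in Hz1 by lra. rewrite Rmax_right in Hz2 by lra.
    apply cont_Gamma_int. apply Hh. apply Hp; lra. }
  unfold is_derive, filterdiff. split. apply is_linear_scal_l.
  intros x Hx. apply (is_filter_lim_locally_unique (K:=R_AbsRing) (V:=AbsRing_NormedModule R_AbsRing)) in Hx. subst x.
  intros eps.
  set (K := (d - c) * M2 * Mp + 1).
  assert (HK : 0 < K). { unfold K. assert (0 <= (d - c) * M2 * Mp).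
    { apply Rmult_le_pos; auto. apply Rmult_le_pos; lra. } lra. }
  assert (He : 0 < eps / K) by (apply Rdiv_lt_0_compat; [apply cond_pos|exact HK]).
  exists (mkposreal _ He). intros y Hy.
  assert (Hy' : Rabs (y - a0) < eps / K) by exact Hy. clear Hy.
  pose proof (RInt_correct _ _ _ (exR g y Hcg)) as I1.
  pose proof (RInt_correct _ _ _ (exR g a0 Hcg)) as I2.
  pose proof (RInt_correct _ _ _ (exR g' a0 Hcg')) as I3.
  pose proof (is_RInt_minus _ _ _ _ _ _ (is_RInt_minus _ _ _ _ _ _ I1 I2) (is_RInt_scal _ _ _ (minus y a0) _ I3)) as HI.
  set (Fb := fun b => @scal R_Ring C_R_ModuleSpace (g (y - b) - g (a0 - b) - (y - a0) * g' (a0 - b)) (psi b)).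
  assert (HI' : @is_RInt C_R_NormedModule Fb c d (minus
         (minus (@RInt CV (fun b : R => @scal R_Ring C_R_ModuleSpace (g (y - b)) (psi b)) c d)
            (@RInt CV (fun b : R => @scal R_Ring C_R_ModuleSpace (g (a0 - b)) (psi b)) c d))
         (scal (minus y a0)
            (@RInt CV (fun b : R => @scal R_Ring C_R_ModuleSpace (g' (a0 - b)) (psi b)) c d)))).
  { refine (is_RInt_ext _ _ _ _ _ _ HI). intros b _. unfold Fb. simpl.
    exact (scal_comb _ _ _ _ _). }
  assert (Hb : forall b, c <= b <= d -> @norm R_AbsRing C_R_NormedModule (Fb b) <= M2 * ((y - a0) * (y - a0)) * Mp).
  { intros b Hb. unfold Fb. eapply Rle_trans. exact (norm_scal (K:=R_AbsRing) (V:=C_R_NormedModule) _ _).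
    change (abs (g (y - b) - g (a0 - b) - (y - a0) * g' (a0 - b))) with
      (Rabs (g (y - b) - g (a0 - b) - (y - a0) * g' (a0 - b))).
    apply Rmult_le_compat. apply Rabs_pos. apply norm_ge_0.
    replace (y - b) with ((a0 - b) + (y - a0)) by ring.
    apply (taylor2 g g' g'' M2 H1 H2 HM). apply HMp; auto. }
  pose proof (norm_RInt_le_const _ c d _ _ Hcd Hb HI') as HN.
  unfold Gamma. eapply Rle_trans. exact HN.
  change (norm (minus y a0)) with (Rabs (y - a0)).
  set (u := Rabs (y - a0)).
  assert (Hu0 : 0 <= u) by apply Rabs_pos.
  assert (Huu : (y - a0) * (y - a0) = u * u) by (unfold u; rewrite <- Rabs_mult, Rabs_right; [reflexivity| apply Rle_ge; apply Rle_0_sqr]).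
  rewrite Huu.
  assert (HuK : u * K < eps).
  { unfold u. apply Rmult_lt_reg_r with (/ K). apply Rinv_0_lt_compat; lra.
    rewrite Rmult_assoc, Rinv_r by lra. rewrite Rmult_1_r. exact Hy'. }
  set (P := (d - c) * M2 * Mp).
  assert (HP0 : 0 <= P) by (unfold P; apply Rmult_le_pos; auto; apply Rmult_le_pos; lra).
  assert (HPK : P <= K) by (unfold K, P; lra).
  replace ((d - c) * (M2 * (u * u) * Mp)) with ((P * u) * u) by (unfold P; ring).
  apply Rmult_le_compat_r; auto. nra.
Qed.

Lemma Phi_derive (psi : R -> C) (g g' g'' : R -> R) M2 delta lo hi a0 :
  0 < delta -> (forall x, is_derive g x (g' x)) -> (forall x, is_derive g' x (g'' x)) ->
  (forall x, Rabs (g'' x) <= M2) ->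
  (forall x, (x < 0 \/ delta < x) -> g x = 0) -> (forall x, (x < 0 \/ delta < x) -> g' x = 0) ->
  (forall x, in_interval lo hi x -> continuous psi x) ->
  in_interval lo hi a0 -> in_interval lo hi (a0 - delta) ->
  is_derive (K:=R_AbsRing) (V:=C_R_NormedModule) (Phi psi g delta) a0 (Phi psi g' delta a0).
Proof.
  intros Hd H1 H2 HM Z1 Z2 Hp Ha Hb.
  destruct (int_open _ _ _ Ha) as [r1 [Hr1 Hr1']].
  destruct (int_open _ _ _ Hb) as [r2 [Hr2 Hr2']].
  set (r := Rmin r1 r2 / 2).
  assert (Hr : 0 < r) by (unfold r; apply Rdiv_lt_0_compat; [apply Rmin_pos; lra | lra]).
  assert (Hrr1 : r < r1) by (unfold r; pose proof (Rmin_l r1 r2); lra).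
  assert (Hrr2 : r < r2) by (unfold r; pose proof (Rmin_r r1 r2); lra).
  set (c := a0 - delta - r). set (d := a0 + r).
  assert (Hc : in_interval lo hi c) by (apply Hr2'; unfold c; rewrite Rabs_left; lra).
  assert (Hdd : in_interval lo hi d) by (apply Hr1'; unfold d; rewrite Rabs_right; lra).
  assert (Hcd : c <= d) by (unfold c, d; lra).
  assert (Hpc : forall b, c <= b <= d -> continuous psi b).
  { intros b Hbb. apply Hp. apply (int_conv _ _ c d); auto. }
  assert (Hcg : forall x, continuous g x) by (intro x; apply (ex_derive_continuous (K:=R_AbsRing) (V:=R_NormedModule)); eexists; apply H1).
  assert (Hcg' : forall x, continuous g' x) by (intro x; apply (ex_derive_continuous (K:=R_AbsRing) (V:=R_NormedModule)); eexists; apply H2).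
  assert (Hloc : locally a0 (fun t => Gamma psi g c d t = Phi psi g delta t)).
  { exists (mkposreal _ Hr). intros t Ht.
    assert (Ht' : Rabs (t - a0) < r) by exact Ht. apply Rabs_def2 in Ht'.
    symmetry. apply Phi_Gamma; auto; try lra; unfold c, d; lra. }
  pose proof (is_derive_ext_loc _ _ a0 _ Hloc (Gamma_derive psi g g' g'' M2 c d a0 H1 H2 HM Hcd Hpc)) as HD.
  rewrite (Phi_Gamma psi g' delta c d a0); auto; try lra; unfold c, d; lra.
Qed.

Definition Kshift (K : R * R -> Prop) (delta : R) : R * R -> Prop :=
  fun z => exists q, K q /\ exists al, 0 <= al <= delta /\ z = (fst q, snd q - al).

Definition minlist {T : Type} (f : T -> R) (l : list T) : R :=
  fold_right (fun t acc => Rmin acc (f t)) 1 l.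

Lemma minlist_pos {T : Type} (f : T -> R) l : (forall t, 0 < f t) -> 0 < minlist f l.
Proof. intro H. induction l; simpl. lra. apply Rmin_pos; auto. Qed.

Lemma minlist_le {T : Type} (f : T -> R) l t : In t l -> minlist f l <= f t.
Proof. induction l; simpl. tauto. intros [<-|Hin]. apply Rmin_r.
  eapply Rle_trans. apply Rmin_l. auto. Qed.

Lemma tube (I : Type) (U : I -> R * R -> Prop) (p : R * R) (delta : R) :
  (forall i, open (U i)) -> (forall al, 0 <= al <= delta -> exists i, U i (fst p, snd p - al)) ->
  exists dd, 0 < dd /\ exists L : list I, forall q al, Rabs (fst q - fst p) < dd ->
     Rabs (snd q - snd p) < dd -> 0 <= al <= delta -> exists i, In i L /\ U i (fst q, snd q - al).
Proof.
  intros Hop Hcov.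
  destruct (Rlt_or_le delta 0) as [Hneg|Hpos].
  { exists 1. split. lra. exists nil. intros; lra. }
  destruct (Hcov 0 ltac:(lra)) as [i0 _].
  assert (Hex : forall al, exists ir : I * posreal, 0 <= al <= delta -> forall z,
     Rabs (fst z - fst p) < snd ir -> Rabs (snd z - (snd p - al)) < snd ir -> U (fst ir) z).
  { intro al. destruct (classic (0 <= al <= delta)) as [Hal|Hal].
    - destruct (Hcov al Hal) as [i Hi]. destruct (Hop i _ Hi) as [e He]. exists (i, e).
      intros _ z Hz1 Hz2. apply He. split; [exact Hz1 | exact Hz2].
    - exists (i0, mkposreal 1 Rlt_0_1). intros; contradiction. }
  set (ch := fun al => proj1_sig (constructive_indefinite_description _ (Hex al))).
  assert (Hch : forall al, 0 <= al <= delta -> forall z,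
     Rabs (fst z - fst p) < snd (ch al) -> Rabs (snd z - (snd p - al)) < snd (ch al) -> U (fst (ch al)) z).
  { intro al. exact (proj2_sig (constructive_indefinite_description _ (Hex al))). }
  assert (Hpos2 : forall t : R * unit, 0 < snd (ch (fst t)) / 2).
  { intro t. apply Rdiv_lt_0_compat. apply cond_pos. lra. }
  apply NNPP. intro Hng.
  apply (compactness_list 1 (0, tt) (delta, tt) (fun t => mkposreal _ (Hpos2 t))).
  intros [l Hl]. apply Hng.
  set (dd := minlist (fun t : R * unit => snd (ch (fst t)) / 2) l).
  exists dd. split. apply minlist_pos. exact Hpos2.
  exists (map (fun t : R * unit => fst (ch (fst t))) l).
  intros q al Hq1 Hq2 Hal.
  destruct (Hl (al, tt)) as [[t1 []] [Htl [Htb Htc]]].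
  { simpl. split; [exact Hal | exact Logic.I]. }
  simpl in Htb, Htc. destruct Htb as [Htb _]. destruct Htc as [Htc _].
  exists (fst (ch t1)). split.
  - apply in_map_iff. exists (t1, tt). split; auto.
  - pose proof (minlist_le (fun t : R * unit => snd (ch (fst t)) / 2) l (t1, tt) Htl) as Hle.
    fold dd in Hle. simpl in Hle.
    apply Hch; auto; simpl.
    + pose proof (cond_pos (snd (ch t1))). lra.
    + replace (snd q - al - (snd p - t1)) with ((snd q - snd p) + (t1 - al)) by ring.
      eapply Rle_lt_trans. apply Rabs_triang.
      rewrite <- Rabs_Ropp in Htc. replace (- (al - t1)) with (t1 - al) in Htc by ring. lra.
Qed.

Lemma compact_Kshift (K : R * R -> Prop) delta : compact_RR K -> compact_RR (Kshift K delta).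
Proof.
  intros HK I U Hop Hcov. unfold compact_RR in HK.
  assert (Ht : forall p, exists dL : R * list I, K p -> 0 < fst dL /\ forall q al,
     Rabs (fst q - fst p) < fst dL -> Rabs (snd q - snd p) < fst dL -> 0 <= al <= delta ->
     exists i, In i (snd dL) /\ U i (fst q, snd q - al)).
  { intro p. destruct (classic (K p)) as [Kp|Kp].
    - destruct (tube I U p delta Hop) as [dd [Hdd [L HL]]].
      { intros al Hal. apply Hcov. exists p. split; auto. exists al. split; auto. }
      exists (dd, L). intros _. split; auto.
    - exists (1, nil). intros; contradiction. }
  set (ch := fun p => proj1_sig (constructive_indefinite_description _ (Ht p))).
  assert (Hch : forall p, K p -> 0 < fst (ch p) /\ forall q al,
     Rabs (fst q - fst p) < fst (ch p) -> Rabs (snd q - snd p) < fst (ch p) -> 0 <= al <= delta ->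
     exists i, In i (snd (ch p)) /\ U i (fst q, snd q - al)).
  { intro p. exact (proj2_sig (constructive_indefinite_description _ (Ht p))). }
  destruct (HK (R * R)%type (fun p q => K p /\ Rabs (fst q - fst p) < fst (ch p) /\ Rabs (snd q - snd p) < fst (ch p)))
    as [l Hl].
  - intros p [q1 q2] [Kp [B1 B2]]. simpl in B1, B2.
    set (e := Rmin (fst (ch p) - Rabs (q1 - fst p)) (fst (ch p) - Rabs (q2 - snd p))).
    assert (He : 0 < e) by (unfold e; apply Rmin_pos; lra).
    exists (mkposreal _ He). intros [y1 y2] [Hy1 Hy2].
    change (Rabs (y1 - q1) < e) in Hy1. change (Rabs (y2 - q2) < e) in Hy2.
    pose proof (Rmin_l (fst (ch p) - Rabs (q1 - fst p)) (fst (ch p) - Rabs (q2 - snd p))).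
    pose proof (Rmin_r (fst (ch p) - Rabs (q1 - fst p)) (fst (ch p) - Rabs (q2 - snd p))).
    fold e in H, H0.
    split; auto. simpl. split.
    + replace (y1 - fst p) with ((y1 - q1) + (q1 - fst p)) by ring.
      eapply Rle_lt_trans. apply Rabs_triang. lra.
    + replace (y2 - snd p) with ((y2 - q2) + (q2 - snd p)) by ring.
      eapply Rle_lt_trans. apply Rabs_triang. lra.
  - intros p Kp. exists p. split; auto. destruct (Hch p Kp) as [Hp _].
    rewrite !Rminus_diag, Rabs_R0. split; auto.
  - exists (flat_map (fun p => snd (ch p)) l).
    intros z [q [Kq [al [Hal ->]]]].
    destruct (Hl q Kq) as [p [Hin [Kp [B1 B2]]]].
    destruct (Hch p Kp) as [_ Hp].
    destruct (Hp q al B1 B2 Hal) as [i [Hi HU]].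
    exists i. split; auto. apply in_flat_map. exists p. auto.
Qed.

Lemma AA_Kshift lo hi delta K :
  (forall p, K p -> AA (fun a => in_interval lo hi a /\ in_interval lo hi (a - delta)) p) ->
  forall z, Kshift K delta z -> AA (in_interval lo hi) z.
Proof.
  intros HK z [q [Kq [al [Hal ->]]]]. destruct (HK q Kq) as [H1 [H2 H3]]. simpl in *. unfold AA; simpl.
  split; [|split].
  - intros t Ht. destruct (H1 t Ht) as [Ha Hb].
    apply (int_conv _ _ (snd q + t - delta) (snd q + t)); auto. lra.
  - destruct H2 as [Ha Hb]. apply (int_conv _ _ (snd q - delta) (snd q)); auto. lra.
  - destruct H3 as [Ha Hb]. apply (int_conv _ _ (fst q + snd q - delta) (fst q + snd q)); auto. lra.
Qed.

Lemma h_range (eps : nat -> R) N nu : (1 <= N)%nat -> (nu <= N)%nat -> 0 <= eps N < 1 ->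
  -1 <= h_eps eps N nu <= 1.
Proof.
  intros HN Hnu He. unfold h_eps.
  assert (Hn : 0 < INR N) by (apply lt_0_INR; lia).
  assert (Hv : INR nu <= INR N) by (apply le_INR; lia).
  assert (Hv0 : 0 <= INR nu) by apply pos_INR.
  set (s := INR nu + eps N * (INR N - INR nu)).
  assert (0 <= eps N * (INR N - INR nu)) by (apply Rmult_le_pos; lra).
  assert (0 <= (1 - eps N) * (INR N - INR nu)) by (apply Rmult_le_pos; lra).
  assert (Hs0 : 0 <= s) by (unfold s; nra).
  assert (Hs1 : s <= INR N) by (unfold s; nra).
  assert (Hq0 : 0 <= s / INR N) by (apply Rdiv_le_0_compat; lra).
  assert (Hq1 : s / INR N <= 1).
  { unfold Rdiv. apply Rle_trans with (INR N * / INR N).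
    apply Rmult_le_compat_r; auto. left; apply Rinv_0_lt_compat; lra.
    rewrite Rinv_r; lra. }
  lra.
Qed.

Lemma scal_comm2 (t w : R) (z : C) :
  @scal R_Ring C_R_ModuleSpace t (Cmult (RtoC w) z) = Cmult (RtoC w) (@scal R_Ring C_R_ModuleSpace t z).
Proof. destruct z as [x y]. compute. f_equal; ring. Qed.

Lemma scal_plus_comb (t w : R) (u z : C) :
  @plus C_R_NormedModule (@scal R_Ring C_R_ModuleSpace t u) (@scal R_Ring C_R_ModuleSpace w (@scal R_Ring C_R_ModuleSpace t z))
  = @scal R_Ring C_R_ModuleSpace t (Cplus u (Cmult (RtoC w) z)).
Proof. destruct u as [u1 u2], z as [z1 z2]. compute. f_equal; ring. Qed.

Lemma sum_is_RInt (theta : R -> R) (psi : R -> C) delta (w x : nat -> R) n :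
  (forall nu, (nu <= n)%nat -> @is_RInt C_R_NormedModule (fun al => @scal R_Ring C_R_ModuleSpace (theta al) (psi (x nu - al))) 0 delta (Phi psi theta delta (x nu))) ->
  @is_RInt C_R_NormedModule (fun al => @scal R_Ring C_R_ModuleSpace (theta al) (sum_n (fun nu => Cmult (RtoC (w nu)) (psi (x nu - al))) n)) 0 delta
    (sum_n (fun nu => Cmult (RtoC (w nu)) (Phi psi theta delta (x nu))) n).
Proof.
  induction n as [|n IH]; intro H.
  - rewrite sum_O.
    refine (is_RInt_ext _ _ _ _ _ _ _).
    2: { rewrite Cm_scal. refine (is_RInt_scal (V:=C_R_NormedModule) _ _ _ _ _ (H 0%nat ltac:(lia))). }
    intros al _. simpl. rewrite sum_O. rewrite scal_comm2. rewrite Cm_scal. reflexivity.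
  - rewrite sum_Sn.
    refine (is_RInt_ext _ _ _ _ _ _ _).
    2: { apply (is_RInt_plus (V:=C_R_NormedModule)). apply IH. intros nu Hnu; apply H; lia.
         rewrite Cm_scal. refine (is_RInt_scal (V:=C_R_NormedModule) _ _ _ _ _ (H (S n) ltac:(lia))). }
    intros al _. simpl. rewrite sum_Sn. exact (scal_plus_comb _ _ _ _). 
Qed.

Lemma scal_minus_norm (t : R) (u v : C) :
  @norm R_AbsRing C_R_NormedModule (@minus C_R_NormedModule (@scal R_Ring C_R_ModuleSpace t u) (@scal R_Ring C_R_ModuleSpace t v))
  <= Rabs t * @norm R_AbsRing C_R_NormedModule (@minus C_R_NormedModule u v).
Proof.
  assert (E : @minus C_R_NormedModule (@scal R_Ring C_R_ModuleSpace t u) (@scal R_Ring C_R_ModuleSpace t v)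
     = @scal R_Ring C_R_ModuleSpace t (@minus C_R_NormedModule u v)).
  { destruct u, v. compute. f_equal; ring. }
  rewrite E. exact (norm_scal (K:=R_AbsRing) (V:=C_R_NormedModule) _ _).
Qed.

Definition unif_prop (A : R -> Prop) (psi : R -> C) : Prop :=
  forall (I' : Type) (epsf : I' -> nat -> R),
    (forall i, adm_seq (epsf i)) ->
    (forall eta, 0 < eta -> exists N1 : nat, forall N, (N1 <= N)%nat ->
        forall i, epsf i N <= eta) ->
    forall K, compact_RR K -> (forall p, K p -> AA A p) ->
    forall e, 0 < e -> exists N0 : nat, forall N, (N0 <= N)%nat ->
      forall i p, K p ->
        Cmod (Cminus (S_eps (epsf i) psi N (fst p) (snd p)) (psi (fst p + snd p))) < e.

Lemma Phi_is_RInt lo hi (psi : R -> C) theta delta x :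
  0 <= delta -> (forall y, continuous theta y) -> (forall y, in_interval lo hi y -> continuous psi y) ->
  in_interval lo hi x -> in_interval lo hi (x - delta) ->
  @is_RInt C_R_NormedModule (fun al => @scal R_Ring C_R_ModuleSpace (theta al) (psi (x - al))) 0 delta (Phi psi theta delta x).
Proof.
  intros Hd Ht Hp H1 H2. apply (RInt_correct (V:=CV)). apply ex_RInt_continuous.
  intros z [Hz1 Hz2]. rewrite Rmin_left in Hz1 by lra. rewrite Rmax_right in Hz2 by lra.
  apply cont_Phi_int. apply Ht. apply Hp. apply (int_conv _ _ (x - delta) x); auto. lra.
Qed.

Lemma main_unif lo hi (psi : R -> C) theta delta Mt :
  0 < delta -> (forall y, continuous theta y) -> 0 <= Mt -> (forall y, Rabs (theta y) <= Mt) ->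
  (forall y, in_interval lo hi y -> continuous psi y) ->
  unif_prop (in_interval lo hi) psi ->
  unif_prop (fun a => in_interval lo hi a /\ in_interval lo hi (a - delta)) (Phi psi theta delta).
Proof.
  intros Hd Htc HMt0 HMt Hpc Hs2 I' epsf Hadm Hsup K HKc HKA e He.
  set (e' := e / (delta * Mt + 1)).
  assert (HD : 0 < delta * Mt + 1) by nra.
  assert (He' : 0 < e') by (apply Rdiv_lt_0_compat; lra).
  destruct (Hs2 I' epsf Hadm Hsup (Kshift K delta) (compact_Kshift K delta HKc)
     (AA_Kshift lo hi delta K HKA) e' He') as [N0 HN0].
  exists (Nat.max N0 1). intros N HN i [a a'] Kp. simpl.
  assert (HN1 : (1 <= N)%nat) by lia.
  assert (Hep : 0 <= epsf i N < 1) by (apply (proj1 (Hadm i)); exact HN1).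
  destruct (HKA _ Kp) as [HA1 [HA2 HA3]]. simpl in HA1, HA2, HA3.
  set (w := fun nu => Binomial.C N nu * ((1 + a) / 2) ^ (N - nu) * ((1 - a) / 2) ^ nu).
  set (x := fun nu => a' + h_eps (epsf i) N nu).
  pose proof (sum_is_RInt theta psi delta w x N) as IS.
  assert (IS' : @is_RInt C_R_NormedModule (fun al => @scal R_Ring C_R_ModuleSpace (theta al) (S_eps (epsf i) psi N a (a' - al))) 0 delta
     (S_eps (epsf i) (Phi psi theta delta) N a a')).
  { refine (is_RInt_ext _ _ _ _ _ _ (IS _)).
    - intros al _. f_equal. unfold S_eps. apply sum_n_ext. intro nu. unfold x.
      f_equal. f_equal. ring.
    - intros nu Hnu. destruct (HA1 (h_eps (epsf i) N nu) (h_range _ _ _ HN1 Hnu Hep)) as [B1 B2].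
      apply (Phi_is_RInt lo hi); auto; lra. }
  pose proof (Phi_is_RInt lo hi psi theta delta (a + a') ltac:(lra) Htc Hpc (proj1 HA3) (proj2 HA3)) as IP.
  pose proof (is_RInt_minus _ _ _ _ _ _ IS' IP) as ID.
  assert (Hb : forall al, 0 <= al <= delta ->
    @norm R_AbsRing C_R_NormedModule (@minus C_R_NormedModule (@scal R_Ring C_R_ModuleSpace (theta al) (S_eps (epsf i) psi N a (a' - al)))
       (@scal R_Ring C_R_ModuleSpace (theta al) (psi (a + a' - al)))) <= Mt * e').
  { intros al Hal. eapply Rle_trans. apply scal_minus_norm.
    apply Rmult_le_compat. apply Rabs_pos. apply norm_ge_0. apply HMt.
    assert (Kz : Kshift K delta (a, a' - al)) by (exists (a, a'); split; auto; exists al; split; auto).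
    pose proof (HN0 N ltac:(lia) i (a, a' - al) Kz) as HH. simpl in HH.
    replace (a + (a' - al)) with (a + a' - al) in HH by ring.
    rewrite Cmod_normC in HH. left. exact HH. }
  pose proof (norm_RInt_le_const _ 0 delta _ _ ltac:(lra) Hb ID) as HN'.
  rewrite Cmod_normC. eapply Rle_lt_trans. exact HN'.
  unfold e'. replace ((delta - 0) * (Mt * (e / (delta * Mt + 1)))) with (e * ((delta * Mt) / (delta * Mt + 1))) by (field; lra).
  assert (Hq : delta * Mt / (delta * Mt + 1) < 1).
  { apply Rmult_lt_reg_r with (delta * Mt + 1); auto. unfold Rdiv. rewrite Rmult_assoc, Rinv_l by lra. lra. }
  nra.
Qed.

Lemma conv_eq (psi : R -> C) g delta : conv_delta psi g delta = Phi psi g delta.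
Proof. extensionality a. unfold conv_delta, Phi. f_equal. extensionality al. apply Cm_scal. Qed.

Theorem mainTheorem4 (lo hi : Rbar) (psi : R -> C) (delta : R) (theta : R -> R) :
  Rbar_lt 2 (Rbar_minus hi lo) ->
  regular_supershift (in_interval lo hi) psi ->
  0 < delta -> Rbar_lt delta (Rbar_minus (Rbar_minus hi lo) 2) ->
  smooth_R_on (fun _ => True) theta ->
  (forall x, theta x <> 0 -> 0 <= x <= delta) ->
  let A_delta := fun a => in_interval lo hi a /\ in_interval lo hi (a - delta) in
  smooth_C_on A_delta (conv_delta psi theta delta) /\
  regular_supershift A_delta (conv_delta psi theta delta).
Proof.
  intros _ [Hpc [_ Hs2]] Hd _ [F [HF0 HF]] Hs A_delta.
  assert (Zn := g_zero F theta delta HF0 HF Hs).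
  assert (Bn := g_bound F theta delta HF0 HF Hs ltac:(lra)).
  assert (Eth : theta = F O) by (extensionality x; symmetry; apply HF0).
  rewrite conv_eq, Eth.
  assert (Hder : forall n a, A_delta a ->
     is_derive (K:=R_AbsRing) (V:=C_R_NormedModule) (Phi psi (F n) delta) a (Phi psi (F (S n)) delta a)).
  { intros n a [Ha Hb]. destruct (Bn (S (S n))) as [M2 [_ HM]].
    apply (Phi_derive psi (F n) (F (S n)) (F (S (S n))) M2 delta lo hi a); auto.
    all: intro; apply HF; auto. }
  split.
  - exists (fun n a => Phi psi (F n) delta a). split. reflexivity. exact Hder.
  - assert (Htc : forall y, continuous (F O) y).
    { intro y. apply (ex_derive_continuous (K:=R_AbsRing) (V:=R_NormedModule)). eexists; apply HF; auto. }
    destruct (Bn O) as [Mt [HMt0 HMt]].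
    assert (HU := main_unif lo hi psi (F O) delta Mt Hd Htc HMt0 HMt Hpc Hs2).
    split; [|split].
    + intros x Hx. apply (ex_derive_continuous (K:=R_AbsRing) (V:=C_R_NormedModule)).
      eexists. apply (Hder O x Hx).
    + intros eps Hadm K HKc HKA e He.
      destruct (HU unit (fun _ => eps) (fun _ => Hadm)) with (K := K) (e := e) as [N0 HN0]; auto.
      { intros eta Heta. destruct Hadm as [_ Hl]. apply is_lim_seq_spec in Hl.
        destruct (Hl (mkposreal _ Heta)) as [N1 HN1]. exists N1. intros N HN _.
        specialize (HN1 N HN). simpl in HN1. rewrite Rminus_0_r in HN1.
        apply Rabs_def2 in HN1. lra. }
      exists N0. intros N HN p Kp. exact (HN0 N HN tt p Kp).
    + exact HU.
Qed.
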